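(* Let $d\ge2$, $n\ge1$, $d\le t\le dn$, and let $\gamma$ be a positive conductivity on the lattice graph below. The following are equivalent: (i) the only $\mathbf u\in\mathbb R^{L_t^{\mathcal S}\cup J_{t-1}^{\mathcal S}}$ with $\sum_{q\in\mathcal N(p)}\gamma_{pq}(\mathbf u_q-\mathbf u_p)=0$ for all $p\in L_{t-1}^{\mathcal S}$, $\mathbf u=0$ on $J_{t-1}^{\mathcal S}$, and $\gamma_{bq_b}(\mathbf u_{q_b}-\mathbf u_b)=0$ for all $b\in J_{t-1}^{\mathcal S}$, is $\mathbf u=0$; (ii) the vectors $\{\mathbf v_p|_{L_{t-1}^{\mathcal S}\cup J_{t-1}^{\mathcal S}}:p\in L_t^{\mathcal S}\}$ are linearly independent; (iii) the operator $T_2'^{(t)}$ is injective.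
   Context: Lattice: $D=\{x\in\mathbb Z^d:1\le x_i\le n\ \forall i\}$, $\partial D=\{p\in\mathbb Z^d:\min_{q\in D}\|q-p\|_{\ell^1}=1\}$; $E$ = unordered pairs $pq\subseteq D\cup\partial D$ with $\|p-q\|_{\ell^1}=1$, not both in $\partial D$; $\mathcal N(p)=\{q:pq\in E\}$; each $b\in\partial D$ has a unique neighbour $q_b\in D$. Conductivity $\gamma:E\to(0,\infty)$, symmetric. For $p\in D\cup\partial D$, $\mathbf v_p\in\mathbb R^{D\cup\partial D}$ has $(\mathbf v_p)_q=\gamma_{pq}$ for $q\in\mathcal N(p)$, $(\mathbf v_p)_p=-\sum_{r\in\mathcal N(p)}\gamma_{pr}$, and $0$ elsewhere. With $s(x)=\sum_ix_i$: $L_t=\{x\in D:s(x)=t\}$, $L_t^{\mathcal S}=\{x\in D:s(x)\le t\}$, $K_t^+=\{x\in\partial D:s(x)=t,\max_ix_i=n+1\}$, $K_t^-=\{x\in\partial D:s(x)=t,\min_ix_i=0\}$, $K_t^{\mathcal S\pm}=\bigcup_{\ell\le t}K_\ell^\pm$, $J_t^{\mathcal S}=K_t^{\mathcal S-}\cup K_{t+1}^{\mathcal S+}$. $T_2'^{(t)}:\mathbb R^{L_t}\to\mathbb R^{J_{t-1}^{\mathcal S}}$: for $\mathbf x\in\mathbb R^{L_t}$ let $\mathbf u$ be the unique function on $L_t^{\mathcal S}\cup J_{t-1}^{\mathcal S}$ with $\mathbf u=\mathbf x$ on $L_t$, $\mathbf u=0$ on $J_{t-1}^{\mathcal S}$,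 and $\sum_{q\in\mathcal N(p)}\gamma_{pq}(\mathbf u_q-\mathbf u_p)=0$ for $p\in L_{t-1}^{\mathcal S}$; then $(T_2'^{(t)}\mathbf x)_b=\gamma_{bq_b}(\mathbf u_{q_b}-\mathbf u_b)$ for $b\in J_{t-1}^{\mathcal S}$. *)

(* Defs.v *)
From HB Require Import structures.
From mathcomp Require Import all_boot all_order all_algebra.
From mathcomp Require Import reals.
Set Implicit Arguments. Unset Strict Implicit. Unset Printing Implicit Defensive.
Import Order.TTheory GRing.Theory Num.Theory.
Local Open Scope ring_scope.

(* Lattice points with coordinates in {0,...,n+1}: this box contains D and
   every point of Z^d at l1-distance 1 from D. *)
Definition pt (d n : nat) := {ffun 'I_d -> 'I_n.+2}.

(* l1 distance (|a-b| = (a-b)+(b-a) with truncated subtraction) *)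
Definition dist1 d n (p q : pt d n) : nat :=
  (\sum_(i < d) ((p i - q i) + (q i - p i))%N)%N.

Definition ssum d n (x : pt d n) : nat := (\sum_(i < d) (x i : nat))%N.

Definition Dset d n : {set pt d n} :=
  [set x : pt d n | [forall i, (0 < x i)%N && (x i <= n)%N]].

Definition bDset d n : {set pt d n} :=
  [set p : pt d n | (p \notin Dset d n) && [exists q in Dset d n, dist1 p q == 1%N]].

Definition edge d n (p q : pt d n) : bool :=
  [&& p \in Dset d n :|: bDset d n, q \in Dset d n :|: bDset d n,
      dist1 p q == 1%N & ~~ ((p \in bDset d n) && (q \in bDset d n))].

Definition nbr d n (p : pt d n) : {set pt d n} := [set q : pt d n | edge p q].

(* q_b : the unique neighbour of a boundary point b *)
Definition qb d n (b : pt d n) : pt d n := odflt b [pick q in nbr b].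

(* the vector v_p (gamma given as a function on pairs, used only on edges) *)
Definition vvec (R : realType) d n (gam : pt d n -> pt d n -> R) (p q : pt d n) : R :=
  if q \in nbr p then gam p q
  else if q == p then - \sum_(r in nbr p) gam p r else 0.

Definition Lset d n (t : nat) : {set pt d n} := [set x in Dset d n | ssum x == t].
Definition LSset d n (t : nat) : {set pt d n} := [set x in Dset d n | ssum x <= t]%N.
Definition Kplus d n (t : nat) : {set pt d n} :=
  [set x in bDset d n | (ssum x == t) && [exists i, (x i : nat) == n.+1]].
Definition Kminus d n (t : nat) : {set pt d n} :=
  [set x in bDset d n | (ssum x == t) && [exists i, (x i : nat) == 0%N]].
Definition KSplus d n (t : nat) : {set pt d n} :=
  [set x in bDset d n | (ssum x <= t)%N && [exists i, (x i : nat) == n.+1]].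
Definition KSminus d n (t : nat) : {set pt d n} :=
  [set x in bDset d n | (ssum x <= t)%N && [exists i, (x i : nat) == 0%N]].
Definition JSset d n (t : nat) : {set pt d n} := KSminus d n t :|: KSplus d n t.+1.

Definition lap (R : realType) d n (gam : pt d n -> pt d n -> R) (u : pt d n -> R)
  (p : pt d n) : R := \sum_(q in nbr p) gam p q * (u q - u p).

(* u (a function on L_t^S ∪ J_{t-1}^S, only its values there matter) solves
   the Dirichlet problem defining T_2'^{(t)} with data x on L_t *)
Definition T2sol (R : realType) d n (gam : pt d n -> pt d n -> R) (t : nat)
  (x u : pt d n -> R) : Prop :=
  [/\ forall p, p \in Lset d n t -> u p = x p,
      forall b, b \in JSset d n t.-1 -> u b = 0
    & forall p, p \in LSset d n t.-1 -> lap gam u p = 0].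

(* graph of T_2'^{(t)} : y = T_2'^{(t)} x (as functions on J_{t-1}^S) *)
Definition T2graph (R : realType) d n (gam : pt d n -> pt d n -> R) (t : nat)
  (x y : pt d n -> R) : Prop :=
  exists u, T2sol gam t x u /\
    forall b, b \in JSset d n t.-1 -> y b = gam b (qb b) * (u (qb b) - u b).

Definition T2_injective (R : realType) d n (gam : pt d n -> pt d n -> R) (t : nat) : Prop :=
  forall x1 x2 y, T2graph gam t x1 y -> T2graph gam t x2 y ->
    forall p, p \in Lset d n t -> x1 p = x2 p.

Definition lin_indep_restr (R : realType) d n (A M : {set pt d n})
  (w : pt d n -> pt d n -> R) : Prop :=
  forall c : pt d n -> R,
    (forall x, x \in M -> \sum_(p in A) c p * w p x = 0) ->
    forall p, p \in A -> c p = 0.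

(* Main.v *)
Require Import Defs.
From HB Require Import structures.
From mathcomp Require Import all_boot all_order all_algebra.
From mathcomp Require Import reals.
From mathcomp Require Import zify ring.
Import Order.TTheory GRing.Theory Num.Theory.
Set Implicit Arguments. Unset Strict Implicit. Unset Printing Implicit Defensive.

Section Geo.
Variables d n : nat.
Implicit Types p q x b : pt d n.

Lemma dist1_one p q : dist1 p q = 1%N ->
  exists i, (forall j, j != i -> p j = q j) /\
            ((p i : nat) = q i + 1 \/ (q i : nat) = p i + 1)%N.
Proof.
move/eqP/sum_nat_eq1 => [i [_ Hi Hj]]; exists i; split.
  by move=> j /Hj /(_ isT) H; apply: val_inj => /=; lia.
lia.
Qed.

Lemma ssum_single p q i : (forall j, j != i -> p j = q j) ->
  (ssum p + q i = ssum q + p i)%N.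
Proof.
move=> H; rewrite /ssum (bigD1 i) //= [in RHS](bigD1 i) //=.
rewrite (eq_bigr (fun j => (q j : nat))) => [|j /H ->//].
by rewrite addnAC [RHS]addnAC [q i + _]addnC.
Qed.

Lemma inDP p : reflect (forall i, 0 < p i <= n)%N (p \in Dset d n).
Proof. by rewrite inE; apply: (iffP forallP). Qed.

Lemma notD p : p \notin Dset d n -> exists i, (p i : nat) = 0%N \/ (p i : nat) = n.+1.
Proof.
move=> /inDP H.
have [i Hi] : exists i, ~~ (0 < p i <= n)%N.
  apply/existsP; apply: contraT; rewrite negb_exists => /forallP H2.
  by exfalso; apply: H => i; have := H2 i; rewrite negbK.
exists i; have := ltn_ord (p i); lia.
Qed.

Lemma bD_notD p : p \in bDset d n -> p \notin Dset d n.
Proof. by rewrite inE => /andP[]. Qed.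

Lemma dist1_sym p q : dist1 p q = dist1 q p.
Proof. by apply: eq_bigr => i _; rewrite addnC. Qed.

Lemma edge_sym p q : edge p q = edge q p.
Proof.
rewrite /edge dist1_sym.
case: (p \in _ :|: _); case: (q \in _ :|: _); case: (p \in bDset d n);
  by case: (q \in bDset d n).
Qed.

Lemma edge_in p q : edge p q ->
  [/\ p \in Dset d n :|: bDset d n, q \in Dset d n :|: bDset d n,
      dist1 p q = 1%N & ~~ ((p \in bDset d n) && (q \in bDset d n))].
Proof. by case/and4P => a b /eqP c e. Qed.

Lemma edgeD p q : p \in Dset d n -> q \in Dset d n :|: bDset d n ->
  dist1 p q = 1%N -> edge p q.
Proof.
move=> pD qD H; rewrite /edge in_setU pD qD H eqxx /=.
by rewrite (negbTE (contraL (@bD_notD p) _)) //= negbK.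
Qed.

Lemma diff_at p q i k : (forall j, j != k -> p j = q j) -> q \in Dset d n ->
  ((p i : nat) = 0%N \/ (p i : nat) = n.+1) -> i = k.
Proof.
move=> H /inDP qD pi; apply/eqP; apply: contraT => /H e.
by have := qD i; rewrite -e; lia.
Qed.

Lemma nbr_bd_form b q i : b \in bDset d n -> q \in nbr b ->
  ((b i : nat) = 0%N \/ (b i : nat) = n.+1) ->
  (forall j, j != i -> q j = b j) /\
  (q i : nat) = (if (b i : nat) == 0%N then 1%N else n).
Proof.
move=> bB; rewrite inE => /edge_in [_ qU /dist1_one [k [Hk Hd]] nb] Hbi.
have qD : q \in Dset d n.
  move: qU; rewrite in_setU => /orP[//|qB]; by rewrite bB qB in nb.
have ik := diff_at Hk qD Hbi.
move/inDP: (qD) => /(_ i) qi.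
subst k; split; first by move=> j /Hk ->.
case: ifP => /eqP; lia.
Qed.

Lemma nbr_bd b : b \in bDset d n -> nbr b = [set qb b].
Proof.
move=> bB.
have ex : exists q, q \in nbr b.
  move: (bB); rewrite inE => /andP[_ /existsP [q /andP [qD /eqP H]]].
  exists q; rewrite inE edge_sym; apply: edgeD => //.
    by rewrite in_setU bB orbT.
  by rewrite dist1_sym.
have [i Hi] := notD (bD_notD bB).
have uniq q1 q2 : q1 \in nbr b -> q2 \in nbr b -> q1 = q2.
  move=> /(nbr_bd_form bB) /(_ Hi) [H1 E1] /(nbr_bd_form bB) /(_ Hi) [H2 E2].
  apply/ffunP => j; case: (eqVneq j i) => [->|ne].
    by apply: val_inj; rewrite /= E1 E2.
  by rewrite H1 // H2.
have qbin : qb b \in nbr b.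
  rewrite /qb; case: pickP => [q //|H]; case: ex => q; by rewrite H.
apply/setP => q; rewrite in_set1; apply/idP/eqP => [Hq|->//]; exact: uniq.
Qed.

Lemma inLS s x : (x \in LSset d n s) = (x \in Dset d n) && (ssum x <= s)%N.
Proof. by rewrite !inE. Qed.
Lemma inKm s x : (x \in KSminus d n s) =
  (x \in bDset d n) && ((ssum x <= s)%N && [exists i, (x i : nat) == 0%N]).
Proof. by rewrite [LHS]inE. Qed.
Lemma inKp s x : (x \in KSplus d n s) =
  (x \in bDset d n) && ((ssum x <= s)%N && [exists i, (x i : nat) == n.+1]).
Proof. by rewrite [LHS]inE. Qed.
Lemma inJS s x : (x \in JSset d n s) = (x \in KSminus d n s) || (x \in KSplus d n s.+1).
Proof. by rewrite /JSset in_setU. Qed.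

Lemma nbr_region s x q : x \in LSset d n s :|: JSset d n s -> q \in nbr x ->
  q \in LSset d n s.+1 :|: JSset d n s.
Proof.
move=> xR; rewrite inE => /edge_in [_ qU /dist1_one [k [Hk Hd]] nb].
have ss := ssum_single Hk.
move: xR; rewrite !in_setU inLS inKm inKp => /orP[/andP[xD xs]|/orP[]].
- move/inDP: (xD) => xDD.
  case qD: (q \in Dset d n).
    by rewrite inLS qD /=; apply/orP; left; lia.
  have qB : q \in bDset d n by move: qU; rewrite in_setU qD.
  have [i Hi] := notD (negbT qD).
  have ik := diff_at (fun j h => esym (Hk j h)) xD Hi; subst k.
  move: (xDD i) => xi; case: Hi => Hi.
    apply/orP; right; apply/orP; left.
    rewrite inKm qB /=; apply/andP; split; first lia.
    by apply/existsP; exists i; rewrite Hi.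
  apply/orP; right; apply/orP; right.
  rewrite inKp qB /=; apply/andP; split; first lia.
  by apply/existsP; exists i; rewrite Hi.
- move=> /andP [xB /andP [xs /existsP [i /eqP xi]]].
  have qD : q \in Dset d n.
    move: qU; rewrite in_setU => /orP[//|qB]; by rewrite xB qB in nb.
  have ik := diff_at Hk qD (or_introl xi); subst k.
  move/inDP: (qD) => /(_ i) qi.
  by rewrite inLS qD /=; apply/orP; left; lia.
- move=> /andP [xB /andP [xs /existsP [i /eqP xi]]].
  have qD : q \in Dset d n.
    move: qU; rewrite in_setU => /orP[//|qB]; by rewrite xB qB in nb.
  have ik := diff_at Hk qD (or_intror xi); subst k.
  move/inDP: (qD) => /(_ i) qi.
  by rewrite inLS qD /=; apply/orP; left; lia.
Qed.

Lemma down_nbr p (i0 : 'I_d) : p \in Dset d n ->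
  exists q, [/\ q \in nbr p, (ssum q < ssum p)%N &
             (q \in Dset d n \/ exists i, (q i : nat) = 0%N)].
Proof.
move=> pD; move/inDP: (pD) => pDD.
pose q : pt d n := [ffun j => if j == i0 then inord (p i0).-1 else p j].
have qi0 : (q i0 : nat) = (p i0).-1.
  rewrite ffunE eqxx inordK //; have := ltn_ord (p i0); have := pDD i0; lia.
have qj j : j != i0 -> q j = p j by rewrite ffunE => /negbTE ->.
have dq : dist1 p q = 1%N.
  rewrite /dist1 (bigD1 i0) //= big1 => [|j /qj ->]; last by rewrite subnn.
  rewrite qi0; have := pDD i0; lia.
have ss := ssum_single (fun j h => esym (qj j h)).
have alt : q \in Dset d n \/ exists i, (q i : nat) = 0%N.
  case: (eqVneq (p i0 : nat) 1%N) => h; first by right; exists i0; rewrite qi0 h.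
  left; apply/inDP => j; case: (eqVneq j i0) => [->|/qj ->]; last exact: pDD.
  rewrite qi0; have := pDD i0; lia.
exists q; split => //.
- rewrite inE; apply: edgeD => //.
  rewrite in_setU; case qD: (q \in Dset d n) => //=.
  rewrite inE qD /=; apply/existsP; exists p; rewrite pD dist1_sym dq //.
- rewrite qi0 in ss; have := pDD i0; lia.
Qed.

Lemma inL s x : (x \in Lset d n s) = (x \in Dset d n) && (ssum x == s).
Proof. by rewrite !inE. Qed.

Lemma J_bd s b : b \in JSset d n s -> b \in bDset d n.
Proof. by rewrite in_setU inKm inKp => /orP[]/andP[]. Qed.

Lemma LS_D s x : x \in LSset d n s -> x \in Dset d n.
Proof. by rewrite inLS => /andP[]. Qed.

Lemma J_notLS s s' b : b \in JSset d n s -> b \notin LSset d n s'.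
Proof.
move=> /J_bd /bD_notD H; apply: contra H; exact: LS_D.
Qed.

End Geo.

Section Alg.
Variables (R : realType) (d n : nat) (gam : pt d n -> pt d n -> R).
Local Open Scope ring_scope.
Hypothesis gpos : forall p q, edge p q -> 0 < gam p q.
Hypothesis gsym : forall p q, edge p q -> gam p q = gam q p.

Lemma vsum (A : {set pt d n}) (c : pt d n -> R) x :
  \sum_(p in A) c p * vvec gam p x = lap gam (fun y => if y \in A then c y else 0) x.
Proof.
set ct := fun y => if y \in A then c y else 0.
set S := \sum_(r in nbr x) gam x r.
have pw p : vvec gam p x = (if p \in nbr x then gam x p else 0) - (if p == x then S else 0).
  rewrite /vvec; case: ifP => [xp|xp].
    have ep : edge p x by move: xp; rewrite inE.
    have px : p \in nbr x by rewrite inE edge_sym.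
    have nx : p != x.
      apply/eqP => e; move: ep; rewrite e => /edge_in [_ _ H _].
      by move: H; rewrite /dist1 big1 // => i _; rewrite subnn.
    by rewrite px (negbTE nx) subr0 gsym.
  have px : p \notin nbr x by move: xp; rewrite !inE edge_sym => ->.
  rewrite (negbTE px) sub0r; rewrite eq_sym; case: eqP => [->|_]; last by rewrite oppr0.
  by [].
rewrite (eq_bigr (fun p => c p * vvec gam p x)) // big_mkcond /=.
rewrite (eq_bigr (fun p => ct p * (if p \in nbr x then gam x p else 0) -
                            ct p * (if p == x then S else 0))); last first.
  by move=> p _; rewrite /ct; case: ifP => _; rewrite ?mul0r ?subr0 // pw mulrBr.
rewrite sumrB.
have -> : \sum_i ct i * (if i == x then S else 0) = ct x * S.
  rewrite (bigD1 x) //= eqxx big1 ?addr0 // => i /negbTE ->; by rewrite mulr0.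
rewrite (eq_bigr (fun i => if i \in nbr x then ct i * gam x i else 0)) => [|i _]; last first.
  by case: ifP; rewrite ?mulr0.
rewrite -big_mkcond /= /lap.
rewrite [in RHS](eq_bigr (fun q => ct q * gam x q - ct x * gam x q)) => [|q _]; last first.
  by rewrite mulrBr !(mulrC (gam x q)).
by rewrite sumrB /S mulr_sumr.
Qed.

Lemma lap_bd b (u : pt d n -> R) : b \in bDset d n ->
  lap gam u b = gam b (qb b) * (u (qb b) - u b).
Proof. by move=> /nbr_bd H; rewrite /lap H big_set1. Qed.

Lemma lapB (u1 u2 : pt d n -> R) x :
  lap gam (fun z => u1 z - u2 z) x = lap gam u1 x - lap gam u2 x.
Proof.
rewrite /lap -sumrB; apply: eq_bigr => q _; rewrite -mulrBr; congr (_ * _).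
ring.
Qed.

Lemma lap0 x : lap gam (fun _ => 0) x = 0.
Proof. by rewrite /lap big1 // => q _; rewrite subrr mulr0. Qed.

Lemma lap_local s (u : pt d n -> R) x :
  (forall b, b \in JSset d n s -> u b = 0) ->
  x \in LSset d n s :|: JSset d n s ->
  lap gam (fun y => if y \in LSset d n s.+1 then u y else 0) x = lap gam u x.
Proof.
move=> HJ xR.
have E y : y \in LSset d n s.+1 :|: JSset d n s ->
    (if y \in LSset d n s.+1 then u y else 0) = u y.
  rewrite in_setU; case: ifP => //= _ yJ; by rewrite HJ.
have xR' : x \in LSset d n s.+1 :|: JSset d n s.
  move: xR; rewrite !in_setU !inLS => /orP[/andP[-> xs]|->]; last by rewrite orbT.
  by rewrite (leq_trans xs (leqnSn _)).
rewrite /lap; apply: eq_bigr => q qN; rewrite E ?(E x) //.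
exact: nbr_region xR qN.
Qed.

Lemma maxp s (i0 : 'I_d) (w : pt d n -> R) :
  (forall p, p \in LSset d n s -> lap gam w p = 0) ->
  (forall p, p \in Lset d n s.+1 -> w p = 0) ->
  (forall b, b \in JSset d n s -> w b = 0) ->
  forall p, p \in LSset d n s -> w p <= 0.
Proof.
move=> Hl HL HJ p0 Hp0; rewrite leNgt; apply/negP => pos.
case: (arg_maxP w Hp0) => pm pmM0 pmax.
have pmM : pm \in LSset d n s := pmM0.
set m := w pm.
have mpos : 0 < m by apply: (lt_le_trans pos); exact: pmax.
have pmS : (fun q => (q \in LSset d n s) && (w q == m)) pm by rewrite /= pmM eqxx.
case: (@arg_minnP _ pm (fun q => (q \in LSset d n s) && (w q == m)) (@ssum d n) pmS) => ps /andP [psM /eqP psm] psmin.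
have wle q : q \in nbr ps -> w q <= m.
  move=> qN; have := nbr_region (s:=s) (x:=ps) (q:=q); rewrite in_setU psM => /(_ isT qN).
  rewrite in_setU => /orP[qL|qJ]; last by rewrite HJ // ltW.
  case qs: (ssum q <= s)%N.
    apply: (pmax q); change (q \in LSset d n s); rewrite inLS qs andbT; exact: LS_D qL.
  rewrite HL ?ltW // inL (LS_D qL) /=; move: qL; rewrite inLS => /andP[_]; lia.
have allm q : q \in nbr ps -> w q = m.
  have H0 := Hl ps psM; rewrite /lap in H0.
  have nn : forall q, q \in nbr ps -> 0 <= gam ps q * (m - w q).
    move=> q' qN; apply: mulr_ge0; last by rewrite subr_ge0 wle.
    by apply: ltW; apply: gpos; move: qN; rewrite inE.
  have s0 : \sum_(q in nbr ps) gam ps q * (m - w q) = 0.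
    apply/eqP; rewrite -oppr_eq0 -sumrN -{2}H0; apply/eqP/eq_bigr => q' _.
    by rewrite -mulrN opprB psm.
  move=> qN; have := psumr_eq0P nn s0 qN; move/eqP; rewrite mulf_eq0 => /orP[/eqP g0|].
    have : 0 < gam ps q by apply: gpos; move: qN; rewrite inE.
    by rewrite g0 ltxx.
  by rewrite subr_eq0 => /eqP ->.
have psD := LS_D psM.
have [q [qN qs alt]] := down_nbr i0 psD.
have wq := allm q qN.
case qD: (q \in Dset d n).
  have qM : q \in LSset d n s.
    rewrite inLS qD /=; move: psM; rewrite inLS => /andP[_]; lia.
  have := psmin q; rewrite /= qM wq eqxx => /(_ isT); lia.
case: alt => [|[i qi]]; first by rewrite qD.
have qB : q \in bDset d n.
  by move: qN; rewrite inE => /edge_in [_ ]; rewrite in_setU qD.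
have qJ : q \in JSset d n s.
  rewrite in_setU inKm qB /=; apply/orP; left; apply/andP; split.
    move: psM; rewrite inLS => /andP[_]; lia.
  by apply/existsP; exists i; rewrite qi.
by move: mpos; rewrite -wq HJ // ltxx.
Qed.

End Alg.

Unset Implicit Arguments. Set Strict Implicit.
Local Open Scope ring_scope.

Theorem lemma3p2 (R : realType) (d n t : nat) (gam : pt d n -> pt d n -> R) :
  (2 <= d)%N -> (1 <= n)%N -> (d <= t)%N -> (t <= d * n)%N ->
  (forall p q, edge p q -> 0 < gam p q) ->
  (forall p q, edge p q -> gam p q = gam q p) ->
  [<-> (* (i) *)
       (forall u : pt d n -> R,
          (forall p, p \in LSset d n t.-1 -> lap gam u p = 0) ->
          (forall b, b \in JSset d n t.-1 -> u b = 0) ->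
          (forall b, b \in JSset d n t.-1 ->
             gam b (qb b) * (u (qb b) - u b) = 0) ->
          forall p, p \in LSset d n t :|: JSset d n t.-1 -> u p = 0);
       (* (ii) *)
       lin_indep_restr (LSset d n t) (LSset d n t.-1 :|: JSset d n t.-1)
         (vvec gam);
       (* (iii) *)
       T2_injective gam t].
Proof.
move=> d2 n1 dt tdn gpos gsym.
have i0 : 'I_d by exists 0%N; lia.
case: t dt tdn => [|s] dt tdn; first lia.
rewrite /=.
tfae => [Hi|Hii|Hiii].
- move=> c Hc p pA.
  set u := fun y => if y \in LSset d n s.+1 then c y else 0.
  have Hu : forall x, x \in LSset d n s :|: JSset d n s -> lap gam u x = 0.
    by move=> x xM; rewrite -(vsum gsym); apply: Hc.
  have := Hi u _ _ _ p; rewrite /u pA => -> //.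
  - by move=> x xM; apply: Hu; rewrite in_setU xM.
  - by move=> b bJ; rewrite (negbTE (J_notLS _ bJ)).
  - move=> b bJ; rewrite -(lap_bd gam u (J_bd bJ)); apply: Hu.
    by rewrite in_setU bJ orbT.
  - by rewrite in_setU pA.
- move=> x1 x2 y [u1 [[E1 Z1 L1] F1]] [u2 [[E2 Z2 L2] F2]] p pL.
  set w := fun z => u1 z - u2 z.
  have wJ : forall b, b \in JSset d n s -> w b = 0.
    by move=> b bJ; rewrite /w Z1 // Z2 // subrr.
  have H : forall p, p \in LSset d n s.+1 -> w p = 0.
    apply: Hii => z zM.
    rewrite (vsum gsym) (lap_local gam wJ zM) (lapB gam).
    move: zM; rewrite in_setU => /orP[zL|zJ]; first by rewrite L1 // L2 // subrr.
    rewrite !(lap_bd gam _ (J_bd zJ)).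
    by rewrite -F1 // -F2 // subrr.
  have pLS : p \in LSset d n s.+1.
    by move: pL; rewrite inL inLS => /andP[-> /eqP ->] /=.
  apply/eqP; rewrite -E1 // -E2 // -subr_eq0; apply/eqP; exact: H.
- move=> u H1 H2 H3 p pR.
  have HL : forall p, p \in Lset d n s.+1 -> u p = 0.
    move=> q qL; apply: (Hiii u (fun _ => 0) (fun _ => 0)) => //.
      exists u; split; first by split.
      by move=> b bJ; rewrite H3.
    exists (fun _ => 0); split; first by split => // q' _; exact: (lap0 gam).
    by move=> b _; rewrite subrr mulr0.
  move: pR; rewrite in_setU => /orP[pL|pJ]; last exact: H2.
  case ps: (ssum p <= s)%N.
    have pM : p \in LSset d n s by rewrite inLS (LS_D pL) ps.
    apply/eqP; rewrite eq_le; apply/andP; split.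
      exact: (maxp gpos i0 H1 HL H2).
    rewrite -oppr_le0.
    apply: (maxp gpos i0 (s := s) (w := fun z => - u z)) => //.
    + move=> q qM.
      have -> : lap gam (fun z => - u z) q = - lap gam u q.
        by rewrite /lap -sumrN; apply: eq_bigr => r _; rewrite -mulrN; congr (_ * _); ring.
      by rewrite H1 // oppr0.
    + by move=> q qL; rewrite HL // oppr0.
    + by move=> b bJ; rewrite H2 // oppr0.
  apply: HL; rewrite inL (LS_D pL) /=; move: pL; rewrite inLS => /andP[_]; lia.
Qed.
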